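(* Let $(X,d)$ be a compact metric space, $f_{1,\infty}$ a sequence of continuous self-maps of $X$ and $m\ge2$. If $(\mathcal{M}(X),\widetilde{f}_{1,\infty})$ is weakly mixing of order $m$, then $(X,f_{1,\infty})$ is weakly mixing of order $m$.
   Context: For $f_{1,\infty}=\{f_n\}_{n\ge1}$ write $f_1^n=f_n\circ\cdots\circ f_1$. $\mathcal{M}(X)$ is the space of Borel probability measures on $X$ with the weak$^*$ topology, and $\widetilde{f}_1^n(\mu)(A)=\mu((f_1^n)^{-1}(A))$ for Borel $A$. A non-autonomous system $(Y,g_{1,\infty})$ is weakly mixing of order $m$ ($m\ge2$) if for any non-empty open sets $U_1,\dots,U_m,V_1,\dots,V_m\subseteq Y$ there is $n\in\mathbb{N}$ with $g_1^n(U_i)\cap V_i\neq\emptyset$ for all $1\le i\le m$. *)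

(* Defs.v *)
From Stdlib Require Import Reals Lra Classical.
Open Scope R_scope.

Set Implicit Arguments.

Section Topo.
Variable X : Metric_Space.
Let T := Base X.

Definition ball (x : T) (r : R) : T -> Prop := fun y => dist X x y < r.

Definition mopen (U : T -> Prop) : Prop :=
  forall x, U x -> exists r, r > 0 /\ forall y, ball x r y -> U y.

Definition mcompact : Prop :=
  forall (I : Type) (C : I -> T -> Prop),
    (forall i, mopen (C i)) -> (forall x, exists i, C i x) ->
    exists l : list I, forall x, exists i, List.In i l /\ C i x.

Definition mcontinuous (f : T -> T) : Prop :=
  forall x eps, eps > 0 -> exists delta, delta > 0 /\
    forall y, dist X x y < delta -> dist X (f x) (f y) < eps.

Definition mcontinuous_R (g : T -> R) : Prop :=
  forall x eps, eps > 0 -> exists delta, delta > 0 /\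
    forall y, dist X x y < delta -> Rabs (g x - g y) < eps.

Definition sigma_algebra (S : (T -> Prop) -> Prop) : Prop :=
  S (fun _ => True) /\
  (forall A, S A -> S (fun x => ~ A x)) /\
  (forall A : nat -> T -> Prop, (forall n, S (A n)) -> S (fun x => exists n, A n x)).

Definition borel (A : T -> Prop) : Prop :=
  forall S, sigma_algebra S -> (forall O, mopen O -> S O) -> S A.

(** * Borel probability measures.  A measure is a set function whose values
    are only constrained on Borel sets (values on non-Borel sets are junk). *)
Definition is_borel_prob (mu : (T -> Prop) -> R) : Prop :=
  (forall A, borel A -> 0 <= mu A) /\
  mu (fun _ => True) = 1 /\
  (forall A : nat -> T -> Prop,
     (forall n, borel (A n)) ->
     (forall n k x, n <> k -> A n x -> A k x -> False) ->
     infinite_sum (fun n => mu (A n)) (mu (fun x => exists n, A n x))).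

Definition ProbMeasure := { mu : (T -> Prop) -> R | is_borel_prob mu }.

(** * Lebesgue integral of a bounded function, as the limit of Lebesgue
    (lower) sums over the partition of the range [-M, M) into intervals of
    length 1/(N+1). *)
Definition lebesgue_sum (mu : (T -> Prop) -> R) (g : T -> R) (M N : nat) : R :=
  let h := / INR (S N) in
  sum_f_R0 (fun k =>
      (- INR M + INR k * h) *
      mu (fun x => - INR M + INR k * h <= g x /\ g x < - INR M + INR (S k) * h))
    (2 * M * S N - 1)%nat.

Definition integral (mu : (T -> Prop) -> R) (g : T -> R) (L : R) : Prop :=
  exists M : nat, (forall x, Rabs (g x) < INR M) /\
    Un_cv (fun N => lebesgue_sum mu g M N) L.

(** * Weak* topology on M(X): the coarsest topology making
    mu |-> \int g dmu continuous for every continuous g : X -> R. *)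
Definition wstar_open (O : ProbMeasure -> Prop) : Prop :=
  forall mu : ProbMeasure, O mu ->
    exists (k : nat) (g : nat -> T -> R) (eps : R),
      eps > 0 /\ (forall i, (i < k)%nat -> mcontinuous_R (g i)) /\
      forall nu : ProbMeasure,
        (forall i, (i < k)%nat -> forall a b,
            integral (proj1_sig mu) (g i) a -> integral (proj1_sig nu) (g i) b ->
            Rabs (a - b) < eps) ->
        O nu.

Lemma mopen_preimage (f : T -> T) (O : T -> Prop) :
  mcontinuous f -> mopen O -> mopen (fun x => O (f x)).
Proof.
  intros hf hO x Ox. destruct (hO _ Ox) as [r [hr hb]].
  destruct (hf x r hr) as [d [hd hd']]. exists d; split; [exact hd|].
  intros y hy. apply hb. apply hd'. exact hy.
Qed.

Lemma borel_preimage (f : T -> T) (A : T -> Prop) :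
  mcontinuous f -> borel A -> borel (fun x => A (f x)).
Proof.
  intros hf hA S [h1 [h2 h3]] hO.
  apply (hA (fun B => S (fun x => B (f x)))).
  - split; [exact h1|split].
    + intros B hB. exact (h2 _ hB).
    + intros B hB. exact (h3 (fun n x => B n (f x)) hB).
  - intros O hO'. apply hO. apply mopen_preimage; assumption.
Qed.

Lemma push_is_borel_prob (f : T -> T) (mu : (T -> Prop) -> R) :
  mcontinuous f -> is_borel_prob mu -> is_borel_prob (fun A => mu (fun x => A (f x))).
Proof.
  intros hf [h1 [h2 h3]]. split; [|split].
  - intros A hA. apply h1. apply borel_preimage; assumption.
  - exact h2.
  - intros A hA hd. apply (h3 (fun n x => A n (f x))).
    + intros n. apply borel_preimage; auto.
    + intros n k x hnk a b. exact (hd n k (f x) hnk a b).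
Qed.

Definition push (f : T -> T) (hf : mcontinuous f) (mu : ProbMeasure) : ProbMeasure :=
  exist _ (fun A => proj1_sig mu (fun x => A (f x)))
        (push_is_borel_prob hf (proj2_sig mu)).

End Topo.

Fixpoint comp_seq (Y : Type) (g : nat -> Y -> Y) (n : nat) (y : Y) : Y :=
  match n with
  | O => y
  | S k => g (S k) (comp_seq g k y)
  end.

Definition weakly_mixing_order (Y : Type) (isopen : (Y -> Prop) -> Prop)
    (g : nat -> Y -> Y) (m : nat) : Prop :=
  forall U V : nat -> Y -> Prop,
    (forall i, (1 <= i <= m)%nat ->
       isopen (U i) /\ isopen (V i) /\ (exists y, U i y) /\ (exists y, V i y)) ->
    exists n : nat, (1 <= n)%nat /\
      forall i, (1 <= i <= m)%nat -> exists y, U i y /\ V i (comp_seq g n y).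

(* Main.v *)
Require Import Defs.
From Stdlib Require Import Reals Lra Lia Classical FunctionalExtensionality PropExtensionality ClassicalEpsilon.
Open Scope R_scope.

Lemma pext (T : Type) (A B : T -> Prop) : (forall x, A x <-> B x) -> A = B.
Proof. intro H. apply functional_extensionality; intro x. apply propositional_extensionality; apply H. Qed.

Lemma borel_open (X : Metric_Space) (O : Base X -> Prop) : mopen X O -> borel X O.
Proof. intros hO S hS hop. apply hop, hO. Qed.

Lemma borel_True (X : Metric_Space) : borel X (fun _ => True).
Proof. intros S [h1 _] _. exact h1. Qed.

Lemma borel_compl (X : Metric_Space) (A : Base X -> Prop) : borel X A -> borel X (fun x => ~ A x).
Proof. intros hA S hS hO. destruct hS as [h1 [h2 h3]]. apply h2. apply hA; [split; auto|auto]. Qed.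

Lemma borel_union (X : Metric_Space) (A B : Base X -> Prop) :
  borel X A -> borel X B -> borel X (fun x => A x \/ B x).
Proof.
  intros hA hB S hS hO. pose proof (hA S hS hO) as a. pose proof (hB S hS hO) as b.
  destruct hS as [h1 [h2 h3]].
  set (F := fun n : nat => match n with O => A | _ => B end).
  replace (fun x => A x \/ B x) with (fun x => exists n, F n x).
  - apply h3. intros [|n]; simpl; auto.
  - apply pext. intro x. split.
    + intros [[|n] H]; simpl in H; auto.
    + intros [H|H]; [exists O|exists 1%nat]; simpl; auto.
Qed.

Lemma borel_inter (X : Metric_Space) (A B : Base X -> Prop) :
  borel X A -> borel X B -> borel X (fun x => A x /\ B x).
Proof.
  intros hA hB.
  replace (fun x => A x /\ B x) with (fun x => ~ (~ A x \/ ~ B x)).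
  - apply borel_compl, borel_union; apply borel_compl; auto.
  - apply pext. intro x. split.
    + intro H. split; apply NNPP; intro; apply H; auto.
    + intros [a b] [H|H]; auto.
Qed.

Lemma borel_empty (X : Metric_Space) : borel X (fun _ => False).
Proof.
  replace (fun _ : Base X => False) with (fun x : Base X => ~ True).
  - apply borel_compl, borel_True.
  - apply pext; tauto.
Qed.

Lemma borel_ext (X : Metric_Space) (A B : Base X -> Prop) :
  (forall x, A x <-> B x) -> borel X A -> borel X B.
Proof. intros H hA. replace B with A; auto. apply pext; auto. Qed.

Lemma mu_empty (X : Metric_Space) (mu : (Base X -> Prop) -> R) :
  is_borel_prob X mu -> mu (fun _ => False) = 0.
Proof.
  intros [h1 [h2 h3]].
  pose proof (h3 (fun _ _ => False) (fun _ => borel_empty X) (fun _ _ _ _ a _ => a)) as H.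
  cbv beta in H.
  replace (fun x : Base X => exists _ : nat, False) with (fun _ : Base X => False) in H
    by (apply pext; intro; split; [tauto|intros [_ a]; auto]).
  set (c := mu (fun _ => False)) in *.
  destruct (Req_dec c 0) as [e|ne]; auto.
  assert (hc : Rabs c > 0) by (apply Rabs_pos_lt; auto).
  destruct (H (Rabs c) hc) as [N HN].
  specialize (HN (S N) ltac:(lia)). rewrite sum_cte in HN. unfold Rdist in HN.
  replace (c * INR (S (S N)) - c) with (c * INR (S N)) in HN by (rewrite (S_INR (S N)); ring).
  rewrite Rabs_mult, (Rabs_right (INR (S N))) in HN by (apply Rle_ge, pos_INR).
  assert (1 <= INR (S N)) by (rewrite S_INR; pose proof (pos_INR N); lra).
  nra.
Qed.

Lemma mu_nonneg (X : Metric_Space) (mu : (Base X -> Prop) -> R) A :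
  is_borel_prob X mu -> borel X A -> 0 <= mu A.
Proof. intros [h1 _] hA; auto. Qed.

Lemma sum_eventually (s : nat -> R) (n : nat) :
  (forall j, (j > n)%nat -> s j = 0) -> infinite_sum s (sum_f_R0 s n).
Proof.
  intros H eps he. exists n. intros N hN.
  replace (sum_f_R0 s N) with (sum_f_R0 s n).
  - unfold Rdist. rewrite Rminus_diag, Rabs_R0. lra.
  - replace N with (n + (N - n))%nat by lia. generalize (N - n)%nat. intro d.
    induction d. + rewrite Nat.add_0_r; auto.
    + replace (n + S d)%nat with (S (n + d)) by lia. simpl. rewrite <- IHd, H by lia. ring.
Qed.

Lemma partition (X : Metric_Space) (mu : (Base X -> Prop) -> R) (C : Base X -> Prop)
  (B : nat -> Base X -> Prop) (n : nat) :
  is_borel_prob X mu -> borel X C ->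
  (forall j, (j <= n)%nat -> borel X (B j)) ->
  (forall j j' x, (j <= n)%nat -> (j' <= n)%nat -> j <> j' -> B j x -> B j' x -> False) ->
  (forall x, C x -> exists j, (j <= n)%nat /\ B j x) ->
  mu C = sum_f_R0 (fun j => mu (fun x => C x /\ B j x)) n.
Proof.
  intros hmu hC hB hd hc.
  pose proof hmu as [h1 [h2 h3]].
  set (D := fun j x => (j <= n)%nat /\ C x /\ B j x).
  assert (hD : forall j, borel X (D j)).
  { intro j. destruct (Compare_dec.le_lt_dec j n) as [l|l].
    - apply (borel_ext X (fun x => C x /\ B j x)). { intro x; unfold D; tauto. }
      apply borel_inter; auto.
    - apply (borel_ext X (fun _ => False)). { intro x; unfold D; split; [tauto|lia]. }
      apply borel_empty. }
  pose proof (h3 D hD) as H.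
  assert (Hd : forall a b x, a <> b -> D a x -> D b x -> False).
  { intros a b x hab [ha [_ hx]] [hb [_ hy]]. eapply hd; eauto. }
  specialize (H Hd).
  replace (fun x => exists n0, D n0 x) with C in H.
  2:{ apply pext. intro x. split.
      - intro cx. destruct (hc x cx) as [j [hj bj]]. exists j. unfold D; auto.
      - intros [j [_ [cx _]]]. auto. }
  replace (sum_f_R0 (fun j => mu (fun x => C x /\ B j x)) n) with (sum_f_R0 (fun j => mu (D j)) n).
  - apply (uniqueness_sum _ _ _ H). apply sum_eventually.
    intros j hj. replace (D j) with (fun _ : Base X => False). apply mu_empty; auto.
    apply pext; intro; unfold D; split; [tauto|lia].
  - apply sum_eq. intros j hj. f_equal. apply pext; intro; unfold D; tauto.
Qed.

Definition tk (M N k : nat) : R := - INR M + INR k * / INR (S N).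
Definition cell (X : Metric_Space) (g : Base X -> R) (M N k : nat) : Base X -> Prop :=
  fun x => tk M N k <= g x /\ g x < tk M N (S k).

Lemma ls_eq X mu g M N : lebesgue_sum X mu g M N =
  sum_f_R0 (fun k => tk M N k * mu (cell X g M N k)) (2 * M * S N - 1)%nat.
Proof. reflexivity. Qed.

Lemma open_lt X (g : Base X -> R) b : mcontinuous_R X g -> mopen X (fun x => g x < b).
Proof.
  intros hg x hx. destruct (hg x (b - g x) ltac:(lra)) as [d [hd H]].
  exists d; split; auto. intros y hy. specialize (H y hy).
  apply Rabs_def2 in H. lra.
Qed.

Lemma open_gt X (g : Base X -> R) b : mcontinuous_R X g -> mopen X (fun x => b < g x).
Proof.
  intros hg x hx. destruct (hg x (g x - b) ltac:(lra)) as [d [hd H]].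
  exists d; split; auto. intros y hy. specialize (H y hy).
  apply Rabs_def2 in H. lra.
Qed.

Lemma borel_cell X g M N k : mcontinuous_R X g -> borel X (cell X g M N k).
Proof.
  intro hg. unfold cell. apply borel_inter.
  - apply (borel_ext X (fun x => ~ (g x < tk M N k))).
    { intro x; split; intro H; [apply Rnot_lt_le; auto| apply Rle_not_lt; auto]. }
    apply borel_compl, borel_open, open_lt; auto.
  - apply borel_open, open_lt; auto.
Qed.

Lemma grid_cover h K y : h > 0 -> 0 <= y -> y < INR K * h ->
  exists k, (k < K)%nat /\ INR k * h <= y /\ y < INR (S k) * h.
Proof.
  intros hh hy. induction K as [|K IH]; intro hK.
  - simpl in hK. lra.
  - destruct (Rlt_le_dec y (INR K * h)) as [l|l].
    + destruct (IH l) as [k [? ?]]. exists k; split; [lia|auto].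
    + exists K; split; [lia|split; auto].
Qed.

Lemma INR_Sinv N : / INR (S N) > 0.
Proof. apply Rinv_0_lt_compat, lt_0_INR; lia. Qed.

Lemma cell_cover X g M N x : Rabs (g x) < INR M ->
  exists k, (k <= 2 * M * S N - 1)%nat /\ cell X g M N k x.
Proof.
  intro hx. apply Rabs_def2 in hx.
  destruct (grid_cover (/ INR (S N)) (2 * M * S N) (g x + INR M) (INR_Sinv N))
    as [k [hk [h1 h2]]]; [lra| |].
  - rewrite !mult_INR. replace (INR 2) with 2 by (simpl; lra).
    field_simplify; [lra| apply not_0_INR; lia].
  - exists k; split; [lia|]. unfold cell, tk. lra.
Qed.

Lemma cell_disj X g M N j j' x : j <> j' -> cell X g M N j x -> cell X g M N j' x -> False.
Proof.
  intros hjj [a b] [c d]. unfold tk in *. pose proof (INR_Sinv N).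
  destruct (Nat.lt_gt_cases j j') as [[l|l] _]; [lia| |].
  - apply le_INR in l. assert (INR (S j) * / INR (S N) <= INR j' * / INR (S N)) by (apply Rmult_le_compat_r; lra). lra.
  - apply le_INR in l. assert (INR (S j') * / INR (S N) <= INR j * / INR (S N)) by (apply Rmult_le_compat_r; lra). lra.
Qed.

Lemma sum_swap (a : nat -> nat -> R) n m :
  sum_f_R0 (fun k => sum_f_R0 (fun j => a k j) m) n = sum_f_R0 (fun j => sum_f_R0 (fun k => a k j) n) m.
Proof.
  induction n as [|n IH].
  - simpl. apply sum_eq. intros; reflexivity.
  - simpl. rewrite IH, <- sum_plus. apply sum_eq. intros; reflexivity.
Qed.

Lemma ls_cross X mu g M N N' : is_borel_prob X mu -> mcontinuous_R X g ->
  (forall x, Rabs (g x) < INR M) ->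
  lebesgue_sum X mu g M N <= lebesgue_sum X mu g M N' + / INR (S N').
Proof.
  intros hmu hg hM. rewrite !ls_eq.
  set (K := (2 * M * S N - 1)%nat). set (K' := (2 * M * S N' - 1)%nat).
  assert (P : forall N0 C, borel X C -> mu C = sum_f_R0 (fun j => mu (fun x => C x /\ cell X g M N0 j x)) (2 * M * S N0 - 1)).
  { intros N0 C hC. apply partition; auto.
    - intros; apply borel_cell; auto.
    - intros j j' x _ _ hj a b. eapply cell_disj; eauto.
    - intros x _. apply cell_cover; auto. }
  transitivity (sum_f_R0 (fun k => sum_f_R0 (fun j => tk M N' (S j) * mu (fun x => cell X g M N k x /\ cell X g M N' j x)) K') K).
  - apply sum_Rle. intros k hk. rewrite (P N' (cell X g M N k)) by (apply borel_cell; auto).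
    rewrite scal_sum. apply sum_Rle. intros j hj.
    destruct (classic (exists x, cell X g M N k x /\ cell X g M N' j x)) as [[x [[a b] [c d]]]|ne].
    + rewrite Rmult_comm. apply Rmult_le_compat_r. apply mu_nonneg; auto.
      apply borel_inter; apply borel_cell; auto. lra.
    + replace (fun x => cell X g M N k x /\ cell X g M N' j x) with (fun _ : Base X => False).
      rewrite mu_empty by auto. lra. apply pext. intro x. split; [tauto|]. intro; apply ne; eauto.
  - rewrite sum_swap.
    transitivity (sum_f_R0 (fun j => tk M N' (S j) * mu (cell X g M N' j)) K').
    + right. apply sum_eq. intros j hj. rewrite (P N (cell X g M N' j)) by (apply borel_cell; auto). rewrite scal_sum. apply sum_eq. intros k hk. rewrite Rmult_comm. f_equal. f_equal. apply pext. intro; tauto.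
    + right. 
      replace (fun j => tk M N' (S j) * mu (cell X g M N' j)) with
        (fun j => tk M N' j * mu (cell X g M N' j) + mu (cell X g M N' j) * / INR (S N')).
      2:{ apply functional_extensionality. intro j. unfold tk. rewrite (S_INR j). ring. }
      rewrite sum_plus, <- scal_sum.
      pose proof (P N' (fun _ => True) (borel_True X)) as HT.
      destruct hmu as [_ [h2 _]]. rewrite h2 in HT.
      replace (sum_f_R0 (fun j => mu (cell X g M N' j)) K') with 1. ring.
      rewrite HT. apply sum_eq. intros; f_equal; apply pext; intro; tauto.
Qed.

Lemma inv_small N0 n : (0 < N0)%nat -> (n >= N0)%nat -> / INR (S n) <= / INR N0.
Proof.
  intros h1 h2. apply Rinv_le_contravar. apply lt_0_INR; auto. apply le_INR; lia.
Qed.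

Lemma integral_exists X mu g M : is_borel_prob X mu -> mcontinuous_R X g ->
  (forall x, Rabs (g x) < INR M) ->
  exists L, Un_cv (fun N => lebesgue_sum X mu g M N) L.
Proof.
  intros hmu hg hM.
  assert (C : Cauchy_crit (fun N => lebesgue_sum X mu g M N)).
  { intros eps he. destruct (archimed_cor1 eps he) as [N0 [h1 h2]]. exists N0.
    intros n m hn hm. unfold Rdist.
    pose proof (ls_cross X mu g M n m hmu hg hM).
    pose proof (ls_cross X mu g M m n hmu hg hM).
    pose proof (inv_small N0 n h2 hn). pose proof (inv_small N0 m h2 hm).
    apply Rabs_def1; lra. }
  destruct (R_complete _ C) as [L HL]. exists L; auto.
Qed.

Lemma Un_cv_le u L c : Un_cv u L -> (forall N, u N <= c) -> L <= c.
Proof.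
  intros H hc. destruct (Rle_lt_dec L c) as [l|l]; auto.
  destruct (H (L - c) ltac:(lra)) as [N HN]. specialize (HN N (le_n _)). specialize (hc N).
  unfold Rdist in HN. apply Rabs_def2 in HN. lra.
Qed.

Lemma Un_cv_ge u L c : Un_cv u L -> (forall N, c - / INR (S N) <= u N) -> c <= L.
Proof.
  intros H hc. destruct (Rle_lt_dec c L) as [l|l]; auto.
  destruct (H ((c - L)/2) ltac:(lra)) as [N HN].
  destruct (archimed_cor1 ((c - L)/2) ltac:(lra)) as [N0 [h1 h2]].
  set (n := Nat.max N N0). specialize (HN n ltac:(unfold n; lia)). specialize (hc n).
  pose proof (inv_small N0 n h2 ltac:(unfold n; lia)).
  unfold Rdist in HN. apply Rabs_def2 in HN. lra.
Qed.

Lemma ls_le_W X mu g M N : is_borel_prob X mu -> mcontinuous_R X g ->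
  (forall x, Rabs (g x) < INR M) -> (forall x, 0 <= g x <= 1) ->
  lebesgue_sum X mu g M N <= mu (fun x => 0 < g x).
Proof.
  intros hmu hg hM h01. rewrite ls_eq.
  rewrite (partition X mu (fun x => 0 < g x) (cell X g M N) (2 * M * S N - 1)); auto.
  2: apply borel_open, open_gt; auto.
  2: intros; apply borel_cell; auto.
  2: intros j j' x _ _ hj a b; eapply cell_disj; eauto.
  2: intros x _; apply cell_cover; auto.
  apply sum_Rle. intros k hk.
  destruct (classic (exists x, cell X g M N k x)) as [[x [a b]]|ne].
  - destruct (Rle_lt_dec (tk M N k) 0) as [l|l].
    + apply Rle_trans with 0.
      * pose proof (mu_nonneg X mu (cell X g M N k) hmu (borel_cell X g M N k hg)). nra.
      * apply mu_nonneg; auto. apply borel_inter. apply borel_open, open_gt; auto. apply borel_cell; auto.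
    + replace (fun x0 => 0 < g x0 /\ cell X g M N k x0) with (cell X g M N k).
      2:{ apply pext. intro y. split; [|tauto]. intros [c d]. split; [lra|]. split; auto. }
      pose proof (mu_nonneg X mu (cell X g M N k) hmu (borel_cell X g M N k hg)).
      specialize (h01 x). nra.
  - replace (cell X g M N k) with (fun _ : Base X => False).
    2:{ apply pext. intro y. split; [tauto|]. intro; apply ne; eauto. }
    rewrite mu_empty by auto. rewrite Rmult_0_r. apply mu_nonneg; auto.
    apply (borel_ext X (fun _ => False)). { intro; tauto. } apply borel_empty.
Qed.

Definition dmu (X : Metric_Space) (x0 : Base X) : (Base X -> Prop) -> R :=
  fun A => if excluded_middle_informative (A x0) then 1 else 0.

Lemma sum_zero (s : nat -> R) n : (forall j, (j <= n)%nat -> s j = 0) -> sum_f_R0 s n = 0.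
Proof.
  induction n; intro H; simpl. apply H; lia. rewrite IHn by (intros; apply H; lia). rewrite H by lia. ring.
Qed.

Lemma dmu_prob X x0 : is_borel_prob X (dmu X x0).
Proof.
  split; [|split].
  - intros A _. unfold dmu. destruct excluded_middle_informative; lra.
  - unfold dmu. destruct excluded_middle_informative; tauto.
  - intros A _ hd. unfold dmu at 2. destruct excluded_middle_informative as [[n0 h]|h].
    + replace 1 with (sum_f_R0 (fun n => dmu X x0 (A n)) n0).
      * apply sum_eventually. intros j hj. unfold dmu. destruct excluded_middle_informative as [e|]; auto.
        exfalso. apply (hd j n0 x0); auto. lia.
      * assert (E : dmu X x0 (A n0) = 1) by (unfold dmu; destruct excluded_middle_informative; tauto).
        destruct n0 as [|p]; simpl; auto.
        rewrite sum_zero, E. ring. intros j hj. unfold dmu. destruct excluded_middle_informative as [e|]; auto.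
        exfalso. apply (hd j (S p) x0); auto. lia.
    + replace 0 with (sum_f_R0 (fun n => dmu X x0 (A n)) 0).
      * apply sum_eventually. intros j hj. unfold dmu. destruct excluded_middle_informative as [e|]; auto.
        exfalso; apply h; eauto.
      * simpl. unfold dmu. destruct excluded_middle_informative as [e|]; auto. exfalso; apply h; eauto.
Qed.

Lemma ls_dirac X x0 g M N : mcontinuous_R X g -> (forall x, Rabs (g x) < INR M) ->
  g x0 - / INR (S N) <= lebesgue_sum X (dmu X x0) g M N.
Proof.
  intros hg hM. rewrite ls_eq.
  pose proof (dmu_prob X x0) as hmu.
  pose proof (partition X (dmu X x0) (fun _ => True) (cell X g M N) (2 * M * S N - 1) hmu (borel_True X)) as P.
  assert (E : dmu X x0 (fun _ => True) = 1) by (apply hmu).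
  rewrite P in E.
  2: intros; apply borel_cell; auto.
  2: intros j j' x _ _ hj a b; eapply cell_disj; eauto.
  2: intros x _; apply cell_cover; auto.
  rewrite <- (Rmult_1_r (g x0 - _)), <- E, scal_sum. apply sum_Rle. intros k hk.
  replace (fun x => True /\ cell X g M N k x) with (cell X g M N k) by (apply pext; intro; tauto).
  unfold dmu. destruct excluded_middle_informative as [[a b]|]; [|lra].
  unfold tk in *. rewrite S_INR in b. lra.
Qed.

Lemma Rmax_lip a b : Rabs (Rmax 0 a - Rmax 0 b) <= Rabs (a - b).
Proof.
  unfold Rmax. destruct (Rle_dec 0 a); destruct (Rle_dec 0 b);
  unfold Rabs; repeat destruct Rcase_abs; lra.
Qed.

Definition goodfun (X : Metric_Space) (g : Base X -> R) (W : Base X -> Prop) : Prop :=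
  mcontinuous_R X g /\ (forall x, 0 <= g x <= 1) /\ (forall x, Rabs (g x) < INR 2) /\
  (forall x, 0 < g x -> W x).

Lemma tent X (W : Base X -> Prop) x0 : mopen X W -> W x0 ->
  exists g, goodfun X g W /\ g x0 = 1.
Proof.
  intros hW hx. destruct (hW x0 hx) as [r [hr hb]].
  exists (fun x => Rmax 0 (1 - dist X x0 x / r)).
  assert (b01 : forall x, 0 <= Rmax 0 (1 - dist X x0 x / r) <= 1).
  { intro x. pose proof (dist_pos X x0 x). split. apply Rmax_l.
    apply Rmax_lub. lra. assert (0 <= dist X x0 x / r) by (unfold Rdiv; apply Rmult_le_pos; [lra|apply Rlt_le, Rinv_0_lt_compat; lra]). lra. }
  split; [split; [|split; [|split]]|].
  - intros x eps he. exists (eps * r). split. nra. intros y hy.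
    eapply Rle_lt_trans. apply Rmax_lip.
    replace (1 - dist X x0 x / r - (1 - dist X x0 y / r)) with ((dist X x0 y - dist X x0 x) / r) by (field; lra).
    unfold Rdiv. rewrite Rabs_mult, (Rabs_right (/ r)) by (apply Rle_ge, Rlt_le, Rinv_0_lt_compat; lra).
    apply (Rmult_lt_reg_r r); [lra|]. rewrite Rmult_assoc, Rinv_l, Rmult_1_r by lra.
    pose proof (dist_tri X x0 y x). pose proof (dist_tri X x0 x y). pose proof (dist_sym X x y).
    apply Rle_lt_trans with (dist X x y); [|lra]. apply Rabs_le. lra.
  - auto.
  - intro x. specialize (b01 x). rewrite Rabs_right by lra. simpl. lra.
  - intros x hx'. apply hb. unfold ball.
    unfold Rmax in hx'. destruct Rle_dec as [l|l]; [|lra].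
    assert (dist X x0 x / r < 1) by lra.
    apply (Rmult_lt_compat_r r) in H; [|lra]. unfold Rdiv in H. rewrite Rmult_assoc, Rinv_l in H; lra.
  - assert (dist X x0 x0 = 0) by (apply dist_refl; auto). rewrite H.
    unfold Rdiv. rewrite Rmult_0_l, Rminus_0_r. unfold Rmax. destruct Rle_dec; lra.
Qed.

Definition tilde (X : Metric_Space) (W : Base X -> Prop) : ProbMeasure X -> Prop :=
  fun nu => exists g, goodfun X g W /\ exists a, integral X (proj1_sig nu) g a /\ a > 1/2.

Lemma tilde_open X W : wstar_open (tilde X W).
Proof.
  intros mu [g [hg [a [ha ha2]]]]. exists 1%nat, (fun _ => g), (a - 1/2).
  split; [lra|split].
  - intros; apply hg.
  - intros nu H. exists g; split; auto.
    destruct (integral_exists X (proj1_sig nu) g 2 (proj2_sig nu) (proj1 hg) (proj1 (proj2 (proj2 hg)))) as [b hb].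
    exists b. assert (I : integral X (proj1_sig nu) g b) by (exists 2%nat; split; auto; apply hg).
    split; auto. specialize (H 0%nat ltac:(lia) a b ha I). apply Rabs_def2 in H. lra.
Qed.

Lemma tilde_nonempty X W : mopen X W -> (exists y, W y) -> exists nu, tilde X W nu.
Proof.
  intros hW [x0 hx]. destruct (tent X W x0 hW hx) as [g [hg e]].
  exists (exist _ (dmu X x0) (dmu_prob X x0)). exists g; split; auto. simpl.
  destruct (integral_exists X (dmu X x0) g 2 (dmu_prob X x0) (proj1 hg) (proj1 (proj2 (proj2 hg)))) as [L hL].
  exists L. split. exists 2%nat; split; auto; apply hg.
  assert (1 <= L). { apply (Un_cv_ge _ _ _ hL). intro N. rewrite <- e. apply ls_dirac; apply hg. }
  lra.
Qed.

Lemma integral_le_W X mu g W a : is_borel_prob X mu -> goodfun X g W -> integral X mu g a ->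
  a <= mu (fun x => 0 < g x).
Proof.
  intros hmu [hg [h01 _]] [M [hM hL]]. apply (Un_cv_le _ _ _ hL). intro N. apply ls_le_W; auto.
Qed.

Lemma disj_le1 X mu A B : is_borel_prob X mu -> borel X A -> borel X B ->
  (forall x, A x -> B x -> False) -> mu A + mu B <= 1.
Proof.
  intros hmu hA hB hd.
  set (F := fun n : nat => match n with 0%nat => A | 1%nat => B | _ => fun x => ~ A x /\ ~ B x end).
  pose proof (partition X mu (fun _ => True) F 2 hmu (borel_True X)) as P.
  assert (E : mu (fun _ => True) = 1) by apply hmu. rewrite P in E.
  - simpl in E.
    replace (fun x => True /\ A x) with A in E by (apply pext; intro; tauto).
    replace (fun x => True /\ B x) with B in E by (apply pext; intro; tauto).
    assert (0 <= mu (fun x => True /\ ~ A x /\ ~ B x)).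
    { apply mu_nonneg; auto. apply (borel_ext X (fun x => ~ (A x \/ B x))). intro; tauto.
      apply borel_compl, borel_union; auto. }
    lra.
  - intros [|[|[|j]]] hj; simpl; auto; try lia.
    apply (borel_ext X (fun x => ~ (A x \/ B x))). intro; tauto. apply borel_compl, borel_union; auto.
  - intros [|[|[|j]]] [|[|[|j']]] x h1 h2 h3; simpl; try lia; try tauto; eauto.
  - intros x _. destruct (classic (A x)). exists 0%nat; simpl; split; auto; lia.
    destruct (classic (B x)). exists 1%nat; simpl; split; auto; lia.
    exists 2%nat; simpl; split; auto.
Qed.

Lemma comp_push X f (hf : forall n, mcontinuous X (f n)) n nu A :
  proj1_sig (comp_seq (fun n => push (hf n)) n nu) A = proj1_sig nu (fun x => A (comp_seq f n x)).
Proof.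
  revert A. induction n; intro A; simpl; auto; try (rewrite IHn; reflexivity).
Qed.

Lemma borel_comp X f (hf : forall n, mcontinuous X (f n)) n A :
  borel X A -> borel X (fun x => A (comp_seq f n x)).
Proof.
  revert A. induction n; intros A hA; simpl; auto.
  apply (IHn (fun y => A (f (S n) y))). apply borel_preimage; auto.
Qed.

Theorem mainTheorem4 (X : Metric_Space) (f : nat -> Base X -> Base X)
  (hf : forall n, mcontinuous X (f n)) (m : nat) :
  mcompact X -> (2 <= m)%nat ->
  weakly_mixing_order (@wstar_open X) (fun n => push (hf n)) m ->
  weakly_mixing_order (@mopen X) f m.
Proof.
  intros _ _ H U V hUV.
  destruct (H (fun i => tilde X (U i)) (fun i => tilde X (V i))) as [n [hn Hn]].
  { intros i hi. destruct (hUV i hi) as [a [b [c d]]].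
    split; [apply tilde_open|split; [apply tilde_open|split]]; apply tilde_nonempty; auto. }
  exists n; split; auto. intros i hi.
  destruct (Hn i hi) as [nu [[gU [hgU [a [ha ha2]]]] [gV [hgV [b [hb hb2]]]]]].
  apply NNPP; intro ne.
  pose proof (integral_le_W X _ gU _ a (proj2_sig nu) hgU ha) as e1.
  pose proof (integral_le_W X _ gV _ b (proj2_sig _) hgV hb) as e2.
  rewrite comp_push in e2.
  assert (D : proj1_sig nu (fun x => 0 < gU x) + proj1_sig nu (fun x => 0 < gV (comp_seq f n x)) <= 1).
  { apply disj_le1. apply (proj2_sig nu).
    - apply borel_open, open_gt, hgU.
    - apply (borel_comp X f hf n (fun y => 0 < gV y)), borel_open, open_gt, hgV.
    - intros x p q. apply ne. exists x. split. apply hgU; auto. apply hgV; auto. }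
  lra.
Qed.
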